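(* Let $p_x$ be given, $\beta\in\mathbb{R}$, and let $G(p_{z|x}):=(\beta-1)H(Z)+H(Z|X)$, where $p_z=Q_xp_{z|x}$. If $p_{z|x}$ ranges over $\varepsilon_{z|x}$-infimal conditional pmf vectors, then $G$ is $\sigma_G$-weakly convex with respect to $p_{z|x}$ on this set, where $$\sigma_G:=\max\Big\{\frac{2|\beta-1|N_z}{\varepsilon_{z|x}},\ \frac{2N_zN_x}{\varepsilon_{z|x}}\Big\}.$$
   Context: Finite alphabets $\mathcal{X},\mathcal{Z}$ with $N_x,N_z$ elements, $p(x)>0$ given. $p_{z|x}=(p(z_1|x_1),\dots,p(z_1|x_{N_x}),p(z_2|x_1),\dots,p(z_{N_z}|x_{N_x}))^T$ with $\sum_zp(z|x)=1$ for each $x$; $Q_x:=I_{N_z}\otimes p_x^T$ so that $p_z=Q_xp_{z|x}$ is the marginal $p(z)=\sum_xp(z|x)p(x)$. $H(Z)=-\sum_zp(z)\log p(z)$, $H(Z|X)=-\sum_xp(x)\sum_zp(z|x)\log p(z|x)$. A conditional pmf vector is $\varepsilon$-infimal if its smallest entry equals $\varepsilon>0$ (all entries are $\ge\varepsilon$). $f$ is $\sigma$-weakly convex on a set $S$ if $f(y)\ge f(x)+\langle\nabla f(x),y-x\rangle-\frac\sigma2\|y-x\|^2$ for all $x,y\in S$ (Euclidean norm). *)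

(* Defs.v *)
From HB Require Import structures.
From mathcomp Require Import all_boot all_order all_algebra.
From mathcomp Require Import all_classical all_reals all_analysis.
Set Implicit Arguments. Unset Strict Implicit. Unset Printing Implicit Defensive.
Import Order.TTheory GRing.Theory Num.Theory.
Import numFieldNormedType.Exports.
Local Open Scope ring_scope.

(* A conditional pmf p(z|x) is stored as the matrix q : 'M_(Nz, Nx) with
   q z x = p(z|x); row-major vectorisation of q is exactly the paper's vector
   p_{z|x} = (p(z1|x1),...,p(z1|xNx),p(z2|x1),...). *)

Section Defs.
Variables (R : realType) (Nx Nz : nat).

Definition marg (px : 'I_Nx -> R) (q : 'M[R]_(Nz, Nx)) (z : 'I_Nz) : R :=
  \sum_(x < Nx) q z x * px x.

Definition entZ (px : 'I_Nx -> R) (q : 'M[R]_(Nz, Nx)) : R :=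
  - \sum_(z < Nz) marg px q z * ln (marg px q z).

Definition condentZX (px : 'I_Nx -> R) (q : 'M[R]_(Nz, Nx)) : R :=
  - \sum_(x < Nx) px x * \sum_(z < Nz) q z x * ln (q z x).

Definition Gfun (beta : R) (px : 'I_Nx -> R) (q : 'M[R]_(Nz, Nx)) : R :=
  (beta - 1) * entZ px q + condentZX px q.

Definition infimal_condpmf (eps : R) (q : 'M[R]_(Nz, Nx)) : Prop :=
  (forall z x, eps <= q z x) /\ (forall x : 'I_Nx, \sum_(z < Nz) q z x = 1).

Definition grad (f : 'M[R]_(Nz, Nx) -> R) (q : 'M[R]_(Nz, Nx)) : 'M[R]_(Nz, Nx) :=
  \matrix_(z, x) derive1 (fun t : R => f (q + t *: delta_mx z x)) 0.

Definition inner (u v : 'M[R]_(Nz, Nx)) : R := \sum_(z < Nz) \sum_(x < Nx) u z x * v z x.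
Definition sqnorm (u : 'M[R]_(Nz, Nx)) : R := inner u u.

Definition weakly_convex_on (f : 'M[R]_(Nz, Nx) -> R) (S : 'M[R]_(Nz, Nx) -> Prop)
    (sigma : R) : Prop :=
  forall q r, S q -> S r ->
    f q + inner (grad f q) (r - q) - sigma / 2 * sqnorm (r - q) <= f r.

End Defs.

(* Main.v *)
Require Import Defs.
From HB Require Import structures.
From mathcomp Require Import all_boot all_order all_algebra.
From mathcomp Require Import all_classical all_reals all_analysis.
From mathcomp Require Import ring lra zify.
Import Order.TTheory GRing.Theory Num.Theory.
Import numFieldNormedType.Exports.
Local Open Scope ring_scope.

Lemma dK {R : realType} (f : R -> R) d k :
  is_derive (0:R) (1:R) f d -> is_derive (0:R) (1:R) (fun t => k * f t) (k * d).
Proof.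
move=> H.
exact: (@is_deriveZ R R^o R^o f k 0 1 d H).
Qed.

Lemma dD {R : realType} (f g : R -> R) df dg :
  is_derive (0:R) (1:R) f df -> is_derive (0:R) (1:R) g dg ->
  is_derive (0:R) (1:R) (fun t => f t + g t) (df + dg).
Proof.
move=> H1 H2.
exact: (@is_deriveD R R^o R^o f g 0 1 df dg H1 H2).
Qed.

Lemma dN {R : realType} (f : R -> R) df :
  is_derive (0:R) (1:R) f df ->
  is_derive (0:R) (1:R) (fun t => - f t) (- df).
Proof.
move=> H1.
exact: (@is_deriveN R R^o R^o f 0 1 df H1).
Qed.

Lemma dS {R : realType} n (h : 'I_n -> R -> R) d :
  (forall i, is_derive (0:R) (1:R) (h i) (d i)) ->
  is_derive (0:R) (1:R) (fun t => \sum_(i < n) h i t) (\sum_(i < n) d i).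
Proof.
move=> H.
have := @is_derive_sum R R^o R^o n h 0 1 d H.
have -> : \sum_(i < n) h i = (fun t => \sum_(i < n) h i t).
  by apply/funext => t; rewrite fct_sumE.
by [].
Qed.

Lemma dphi {R : realType} (a c : R) : 0 < a ->
  is_derive (0:R) (1:R) (fun t => (a + t * c) * ln (a + t * c)) (c * (ln a + 1)).
Proof.
move=> a0.
have Hg : is_derive (0:R) (1:R) (fun t : R => a + t * c) c.
  have := @is_derive_id R R^o 0 1.
  move=> /(@dK R id 1 c) Hi.
  have := @dD R _ _ _ _ (@is_derive_cst R R^o R^o a 0 1) Hi.
  rewrite add0r mulr1.
  have -> : (fun t : R => cst a t + c * id t) = (fun t => a + t * c).
    by apply/funext => t /=; rewrite mulrC.
  by [].
have Hl : is_derive (0:R) (1:R) (@ln R \o (fun t : R => a + t * c)) (a^-1 * c).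
  apply: is_derive1_comp.
  by rewrite /= mul0r addr0; apply: is_derive1_ln.
have := @is_deriveM R R^o _ _ 0 1 _ _ Hg Hl.
rewrite /= mul0r addr0 => H.
apply: (is_derive_eq H).
rewrite /GRing.scale /=.
by rewrite mulrA mulfV ?gt_eqF // mul1r mulrDr mulr1 addrC mulrC.
Qed.

Lemma dl (R : realType) (a b : bool) : ((a && b)%:R : R) = a%:R * b%:R.
Proof. by case: a; case: b; rewrite /= ?mul1r ?mul0r. Qed.

Lemma sum_delta (R : realType) n (i0 : 'I_n) (F : 'I_n -> R) :
  \sum_(i < n) ((i == i0)%:R * F i) = F i0.
Proof.
rewrite (bigD1 i0) //= eqxx mul1r big1 ?addr0 // => i /negbTE ->.
by rewrite mul0r.
Qed.

Lemma gradG (R : realType) Nx Nz (px : 'I_Nx -> R) beta (q : 'M[R]_(Nz, Nx))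
  z0 x0 (hq : forall z x, 0 < q z x) (hm : forall z, 0 < marg px q z) :
  grad (Gfun beta px) q z0 x0 =
  (beta - 1) * - (px x0 * (ln (marg px q z0) + 1)) + - (px x0 * (ln (q z0 x0) + 1)).
Proof.
rewrite /grad mxE derive1E.
have E : (fun t => Gfun beta px (q + t *: delta_mx z0 x0)) =
  (fun t => (beta - 1) * - \sum_(z < Nz) (marg px q z + t * ((z == z0)%:R * px x0)) *
                          ln (marg px q z + t * ((z == z0)%:R * px x0))
     + - \sum_(x < Nx) px x * \sum_(z < Nz)
          (q z x + t * ((z == z0)%:R * (x == x0)%:R)) *
           ln (q z x + t * ((z == z0)%:R * (x == x0)%:R))).
  apply/funext => t; rewrite /Gfun /entZ /condentZX.
  have Hm : forall z, marg px (q + t *: delta_mx z0 x0) z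
                      = marg px q z + t * ((z == z0)%:R * px x0).
    move=> z; rewrite /marg.
    have -> : t * ((z == z0)%:R * px x0) =
       \sum_(x < Nx) t * ((z == z0)%:R * ((x == x0)%:R * px x)).
      by rewrite -mulr_sumr -mulr_sumr sum_delta.
    rewrite -big_split /=; apply: eq_bigr => x _; rewrite !mxE dl; ring.
  congr (_ * - _ + - _).
    by apply: eq_bigr => z _; rewrite Hm.
  apply: eq_bigr => x _; congr (_ * _); apply: eq_bigr => z _.
  by rewrite !mxE dl.
rewrite E.
have D := dD _ _ _ _ (dK _ _ (beta - 1) (dN _ _ (dS _ _ _ (fun z => dphi _ ((z == z0)%:R * px x0) (hm z)))))
   (dN _ _ (dS _ _ _ (fun x => dK _ _ (px x) (dS _ _ _ (fun z => dphi _ ((z == z0)%:R * (x == x0)%:R) (hq z x)))))).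
rewrite (@derive_val _ _ _ _ _ _ _ D).
congr (_ * - _ + - _).
  rewrite (eq_bigr (fun z => (z == z0)%:R * (px x0 * (ln (marg px q z) + 1)))) ?sum_delta //.
  by move=> z _; ring.
rewrite (eq_bigr (fun x => (x == x0)%:R * (px x * (ln (q z0 x) + 1)))) ?sum_delta //.
move=> x _.
rewrite (eq_bigr (fun z => (z == z0)%:R * ((x == x0)%:R * (ln (q z x) + 1)))) ?sum_delta //.
  ring.
by move=> z _; ring.
Qed.

Lemma ln_le_sub1 (R : realType) (y : R) : 0 < y -> ln y <= y - 1.
Proof.
move=> y0; have := @le_ln1Dx R (y - 1).
have -> : 1 + (y - 1) = y by ring.
apply; lra.
Qed.

Lemma Dbnd (R : realType) (a b : R) : 0 < a -> 0 < b ->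
  0 <= a * ln a - b * ln b - (a - b) * (ln b + 1) <= (a - b) ^+ 2 / b.
Proof.
move=> a0 b0.
have E : a * ln a - b * ln b - (a - b) * (ln b + 1) = a * (ln a - ln b) - a + b by ring.
rewrite E.
have h1 := @ln_le_sub1 _ _ (divr_gt0 a0 b0).
have h2 := @ln_le_sub1 _ _ (divr_gt0 b0 a0).
rewrite ln_div ?posrE // in h1.
rewrite ln_div ?posrE // in h2.
apply/andP; split.
  have : a * (ln b - ln a) <= a * (b / a - 1) by rewrite ler_pM2l.
  have -> : a * (b / a - 1) = b - a by field; rewrite gt_eqF.
  lra.
have : a * (ln a - ln b) <= a * (a / b - 1) by rewrite ler_pM2l.
have : a * (a / b - 1) - a + b = (a - b) ^+ 2 / b.
  by field; rewrite gt_eqF.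
lra.
Qed.

Lemma jensen (R : realType) n (w d : 'I_n -> R) :
  (forall x, 0 <= w x) -> \sum_(x < n) w x = 1 ->
  (\sum_(x < n) w x * d x) ^+ 2 <= \sum_(x < n) w x * d x ^+ 2.
Proof.
move=> w0 w1.
set mu := \sum_(x < n) w x * d x.
have H : 0 <= \sum_(x < n) w x * (d x - mu) ^+ 2.
  by apply: sumr_ge0 => x _; apply: mulr_ge0 => //; apply: sqr_ge0.
have E : \sum_(x < n) w x * (d x - mu) ^+ 2 =
   \sum_(x < n) w x * d x ^+ 2 + (- (2 * mu)) * mu + mu ^+ 2 * \sum_(x < n) w x.
  rewrite (eq_bigr (fun x => w x * d x ^+ 2 + (- (2 * mu)) * (w x * d x) + mu ^+ 2 * w x)); last by move=> x _; ring.
  by rewrite !big_split /= -!mulr_sumr.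
rewrite E w1 in H; lra.
Qed.

Lemma div_mono (R : realType) (x b e : R) : 0 <= x -> 0 < e -> e <= b -> x / b <= x / e.
Proof.
move=> x0 e0 eb; apply: ler_wpM2l => //.
rewrite lef_pV2 ?posrE //; exact: lt_le_trans eb.
Qed.

Lemma sum1_pos (R : realType) n (F : 'I_n -> R) : \sum_(i < n) F i = 1 -> (0 < n)%N.
Proof. by case: n F => [F|//]; rewrite big_ord0 => /eqP; rewrite eq_sym oner_eq0. Qed.

Theorem mainTheorem7 (R : realType) (Nx Nz : nat) (px : 'I_Nx -> R)
    (px_pos : forall x, 0 < px x) (px_sum : \sum_(x < Nx) px x = 1)
    (beta eps : R) (eps_pos : 0 < eps) :
  @weakly_convex_on R Nx Nz (Gfun beta px) (@infimal_condpmf R Nx Nz eps)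
    (Num.max (2 * `|beta - 1| * Nz%:R / eps) (2 * Nz%:R * Nx%:R / eps)).
Proof.
move=> q r [Hq Sq] [Hr Sr].
have px0 : forall x, 0 <= px x by move=> x; exact: ltW.
have px1 : forall x, px x <= 1.
  move=> x; rewrite -px_sum (bigD1 x) //= lerDl; apply: sumr_ge0 => ? _; exact: px0.
have qp : forall z x, 0 < q z x by move=> z x; exact: lt_le_trans eps_pos (Hq z x).
have rp : forall z x, 0 < r z x by move=> z x; exact: lt_le_trans eps_pos (Hr z x).
have mge : forall s : 'M[R]_(Nz, Nx), (forall z x, eps <= s z x) ->
    forall z, eps <= marg px s z.
  move=> s Hs z; rewrite /marg.
  have -> : eps = \sum_(x < Nx) eps * px x by rewrite -mulr_sumr px_sum mulr1.
  by apply: ler_sum => x _; apply: ler_wpM2r.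
have mq : forall z, 0 < marg px q z by move=> z; exact: lt_le_trans eps_pos (mge q Hq z).
have mr : forall z, 0 < marg px r z by move=> z; exact: lt_le_trans eps_pos (mge r Hr z).
have EG : forall s : 'M[R]_(Nz, Nx), Gfun beta px s = \sum_(z < Nz)
    ((beta - 1) * - (marg px s z * ln (marg px s z)) +
     - \sum_(x < Nx) px x * (s z x * ln (s z x))).
  move=> s; rewrite /Gfun /entZ /condentZX big_split /=.
  congr (_ + _); first by rewrite -sumrN mulr_sumr.
  rewrite sumrN exchange_big /=; congr (- _); apply: eq_bigr => x _.
  by rewrite mulr_sumr.
set m := marg px q; set m' := marg px r.
have EI : inner (grad (Gfun beta px) q) (r - q) = \sum_(z < Nz)
   ((beta - 1) * - ((ln (m z) + 1) * (m' z - m z)) +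
    - \sum_(x < Nx) px x * ((ln (q z x) + 1) * (r z x - q z x))).
  rewrite /inner; apply: eq_bigr => z _.
  rewrite (eq_bigr (fun x => (beta - 1) * - ((ln (m z) + 1) * (px x * (r z x - q z x)))
      + - (px x * ((ln (q z x) + 1) * (r z x - q z x))))); last first.
    by move=> x _; rewrite gradG // !mxE; ring.
  rewrite big_split /= sumrN; congr (_ + _).
  rewrite -mulr_sumr sumrN -mulr_sumr; congr (_ * - (_ * _)).
  rewrite /m' /m /marg -sumrB; apply: eq_bigr => x _; ring.
rewrite !EG EI -/m -/m'.
set S := sqnorm (r - q).
set K := (`|beta - 1| + 1) / eps.
have hS : S = \sum_(z < Nz) \sum_(x < Nx) (r z x - q z x) ^+ 2.
  by rewrite /S /sqnorm /inner; apply: eq_bigr => z _; apply: eq_bigr => x _; rewrite !mxE expr2.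
have S0 : 0 <= S.
  by rewrite hS; apply: sumr_ge0 => z _; apply: sumr_ge0 => x _; apply: sqr_ge0.
have key : forall z,
  ((beta - 1) * - (m z * ln (m z)) - \sum_(x < Nx) px x * (q z x * ln (q z x))) +
  ((beta - 1) * - ((ln (m z) + 1) * (m' z - m z)) -
      \sum_(x < Nx) px x * ((ln (q z x) + 1) * (r z x - q z x))) -
  ((beta - 1) * - (m' z * ln (m' z)) - \sum_(x < Nx) px x * (r z x * ln (r z x)))
  = (beta - 1) * (m' z * ln (m' z) - m z * ln (m z) - (m' z - m z) * (ln (m z) + 1)) +
    \sum_(x < Nx) px x * (r z x * ln (r z x) - q z x * ln (q z x) -
                          (r z x - q z x) * (ln (q z x) + 1)).
  move=> z.
  rewrite [X in _ = _ + X](eq_bigr (fun x => px x * (r z x * ln (r z x)) - px x * (q z x * ln (q z x))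
      - px x * ((ln (q z x) + 1) * (r z x - q z x))) (P := xpredT)); last by move=> x _; ring.
  rewrite !sumrB; ring.
have Tz : forall z,
  (beta - 1) * (m' z * ln (m' z) - m z * ln (m z) - (m' z - m z) * (ln (m z) + 1)) +
    \sum_(x < Nx) px x * (r z x * ln (r z x) - q z x * ln (q z x) -
                          (r z x - q z x) * (ln (q z x) + 1))
  <= K * \sum_(x < Nx) (r z x - q z x) ^+ 2.
  move=> z.
  set U := (\sum_(x < Nx) (r z x - q z x) ^+ 2) / eps.
  have U0 : 0 <= \sum_(x < Nx) (r z x - q z x) ^+ 2.
    by apply: sumr_ge0 => x _; apply: sqr_ge0.
  have [D1 D2] := andP (Dbnd _ _ _ (mr z) (mq z)).
  have J : (m' z - m z) ^+ 2 <= \sum_(x < Nx) (r z x - q z x) ^+ 2.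
    have -> : m' z - m z = \sum_(x < Nx) px x * (r z x - q z x).
      by rewrite /m' /m /marg -sumrB; apply: eq_bigr => x _; ring.
    apply: le_trans (@jensen R Nx px (fun x => r z x - q z x) px0 px_sum) _.
    by apply: ler_sum => x _; apply: ler_piMl => //; apply: sqr_ge0.
  have Dm : m' z * ln (m' z) - m z * ln (m z) - (m' z - m z) * (ln (m z) + 1) <= U.
    apply: le_trans D2 _.
    apply: le_trans (div_mono _ _ _ _ (sqr_ge0 _) eps_pos (mge q Hq z)) _.
    by apply: ler_wpM2r => //; rewrite invr_ge0 ltW.
  have Dq : \sum_(x < Nx) px x * (r z x * ln (r z x) - q z x * ln (q z x) -
                          (r z x - q z x) * (ln (q z x) + 1)) <= U.
    rewrite /U mulr_suml; apply: ler_sum => x _.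
    have [E1 E2] := andP (Dbnd _ _ _ (rp z x) (qp z x)).
    apply: le_trans (ler_piMl E1 (px1 x)) _.
    apply: le_trans E2 _.
    exact: div_mono _ _ _ _ (sqr_ge0 _) eps_pos (Hq z x).
  have Bm : (beta - 1) * (m' z * ln (m' z) - m z * ln (m z) - (m' z - m z) * (ln (m z) + 1))
      <= `|beta - 1| * U.
    apply: le_trans (_ : _ <= `|beta - 1| * (m' z * ln (m' z) - m z * ln (m z)
                                   - (m' z - m z) * (ln (m z) + 1))) _.
      by apply: ler_wpM2r => //; apply: ler_norm.
    by apply: ler_wpM2l.
  have -> : K * \sum_(x < Nx) (r z x - q z x) ^+ 2 = `|beta - 1| * U + U.
    by rewrite /K /U; ring.
  lra.
have TB : \sum_(z < Nz) ((beta - 1) * (m' z * ln (m' z) - m z * ln (m z) - (m' z - m z) * (ln (m z) + 1)) +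
    \sum_(x < Nx) px x * (r z x * ln (r z x) - q z x * ln (q z x) -
                          (r z x - q z x) * (ln (q z x) + 1))) <= K * S.
  by rewrite hS mulr_sumr; apply: ler_sum => z _; exact: Tz.
have KS : K * S <= Num.max (2 * `|beta - 1| * Nz%:R / eps) (2 * Nz%:R * Nx%:R / eps) / 2 * S.
  case: (leqP 2 Nz) => hNz.
    apply: ler_wpM2r => //.
    have hNx := sum1_pos _ _ _ px_sum.
    have n2 : 2 <= Nz%:R :> R by rewrite ler_nat.
    have n1 : 1 <= Nx%:R :> R by rewrite ler1n.
    have e0 : 0 < eps^-1 by rewrite invr_gt0.
    set M := Num.max _ _.
    have ha : 2 * `|beta - 1| * Nz%:R / eps <= M by rewrite le_max lexx.
    have hb : 2 * Nz%:R * Nx%:R / eps <= M by rewrite le_max lexx orbT.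
    have h1 : 0 <= `|beta - 1| * eps^-1 * (Nz%:R - 2).
      by apply: mulr_ge0; [apply: mulr_ge0; [exact: normr_ge0|exact: ltW]|lra].
    have h3 : 2 <= Nz%:R * Nx%:R :> R.
      apply: le_trans n2 _; rewrite -{1}(mulr1 Nz%:R); apply: ler_wpM2l => //; lra.
    have h2 : 0 <= eps^-1 * (Nz%:R * Nx%:R - 2).
      by apply: mulr_ge0; [exact: ltW|lra].
    rewrite /K; lra.
  have -> : S = 0.
    rewrite hS; apply: big1 => z _; apply: big1 => x _.
    have E1 : forall s : 'M[R]_(Nz, Nx), \sum_(z' < Nz) s z' x = s z x.
      move=> s; rewrite (bigD1 z) //= big1 ?addr0 // => z' ne.
      exfalso; move/negP: ne; apply; apply/eqP/val_inj => /=.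
      have := ltn_ord z; have := ltn_ord z'; lia.
    have := Sr x; have := Sq x; rewrite !E1 => -> ->.
    by rewrite subrr expr0n.
  by rewrite !mulr0.
match goal with |- is_true ((?A + ?I - ?X : R) <= ?B) =>
  have E : A + I - B <= K * S by
    rewrite -big_split -sumrB /= (eq_bigr _ (fun z _ => key z)); exact: TB
end.
lra.
Qed.
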